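(* Let $m$ be a monitor in open normal form, $s\in\mathit{Act}^*$ and $x$ a variable such that $m\xrightarrow{s}m_s$ for some $m_s$ having $x$ as a summand. Then $\mathcal{E}_v\vdash m=m'+s.x$ for some monitor $m'$ such that there is no $m''$ with $m'\xrightarrow{s}m''$ and $m''$ having $x$ as a summand.
   Context: Monitors: terms $m,n ::= v \mid a.m \mid m+n \mid x$ over a nonempty action set $\mathit{Act}$ and variables $x$, verdicts $v::=\mathit{end}\mid\mathit{yes}\mid\mathit{no}$. Terms are considered modulo A1–A4 below; a term $t$ has $x$ as a summand if $t=x+t'$ modulo A1–A4 for some $t'$; $\sum_{i\in I}m_i$ is $\mathit{end}$ for $I=\emptyset$. For $s=a_1\dots a_k$, $s.m$ denotes $a_1.(\cdots a_k.m)$ ($\varepsilon.m=m$), and $m\xrightarrow{s}m'$ means $m=m_0\xrightarrow{a_1}m_1\cdots\xrightarrow{a_k}m_k=m'$, where $\xrightarrow{a}$ is the least relation with $a.m\xrightarrow{a}m$, $m\xrightarrow{a}m'$ implying $m+n\xrightarrow{a}m'$ and $n+m\xrightarrow{a}m'$, and $v\xrightarrow{a}v$ for verdicts $v$ (variables have no transitions). An open normal form is a term $\sum_{a\in A}a.m_a+\sum_{i\in I}x_i\ [+\mathit{yes}]\ [+\mathit{no}]$ with $A\subseteq\mathit{Act}$ finite (one summand per $a\in A$), $\{x_i\mid i\in I\}$ a finite set of distinct variables, and each $m_a$ an open normal form different from $\mathit{end}$. $\mathcal{E}\vdash m=n$ denotes derivability by the rules of equational logic. $\mathcal{E}_v$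 consists of (A1) $x+y=y+x$; (A2) $x+(y+z)=(x+y)+z$; (A3) $x+x=x$; (A4) $x+\mathit{end}=x$; and, for each $a\in\mathit{Act}$, ($E_a$) $a.\mathit{end}=\mathit{end}$; ($Y_a$) $\mathit{yes}=\mathit{yes}+a.\mathit{yes}$; ($N_a$) $\mathit{no}=\mathit{no}+a.\mathit{no}$; ($D_a$) $a.(x+y)=a.x+a.y$. *)

(* Defs.v *)
From Stdlib Require Import List.
Import ListNotations.
Set Implicit Arguments.

Inductive verdict : Type := vend | vyes | vno.

Section Monitors.
Variables (A V : Type).  (* A = Act (actions), V = variables *)

Inductive mon : Type :=
| Verd : verdict -> mon
| Pre  : A -> mon -> mon
| Sum  : mon -> mon -> mon
| Var  : V -> mon.

Definition mend : mon := Verd vend.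

Fixpoint subst (sg : V -> mon) (t : mon) : mon :=
  match t with
  | Verd v => Verd v
  | Pre a m => Pre a (subst sg m)
  | Sum m n => Sum (subst sg m) (subst sg n)
  | Var x => sg x
  end.

Inductive derivable (ax : mon -> mon -> Prop) : mon -> mon -> Prop :=
| d_ax    : forall t u, ax t u -> derivable ax t u
| d_refl  : forall t, derivable ax t t
| d_sym   : forall t u, derivable ax t u -> derivable ax u t
| d_trans : forall t u w, derivable ax t u -> derivable ax u w -> derivable ax t w
| d_pre   : forall a t u, derivable ax t u -> derivable ax (Pre a t) (Pre a u)
| d_sum   : forall t1 u1 t2 u2, derivable ax t1 u1 -> derivable ax t2 u2 ->
              derivable ax (Sum t1 t2) (Sum u1 u2)
| d_subst : forall sg t u, derivable ax t u -> derivable ax (subst sg t) (subst sg u).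

Inductive axA : mon -> mon -> Prop :=
| A1 : forall x y, axA (Sum x y) (Sum y x)
| A2 : forall x y z, axA (Sum x (Sum y z)) (Sum (Sum x y) z)
| A3 : forall x, axA (Sum x x) x
| A4 : forall x, axA (Sum x mend) x.

Inductive axEv : mon -> mon -> Prop :=
| Ev_A : forall t u, axA t u -> axEv t u
| Ev_E : forall a, axEv (Pre a mend) mend
| Ev_Y : forall a, axEv (Verd vyes) (Sum (Verd vyes) (Pre a (Verd vyes)))
| Ev_N : forall a, axEv (Verd vno) (Sum (Verd vno) (Pre a (Verd vno)))
| Ev_D : forall a x y, axEv (Pre a (Sum x y)) (Sum (Pre a x) (Pre a y)).

Definition ac_eq := derivable axA.
Definition Ev_eq := derivable axEv.

Definition has_summand (t : mon) (x : V) : Prop :=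
  exists t', ac_eq t (Sum (Var x) t').

Inductive step : mon -> A -> mon -> Prop :=
| st_pre  : forall a m, step (Pre a m) a m
| st_suml : forall m n a m', step m a m' -> step (Sum m n) a m'
| st_sumr : forall m n a m', step n a m' -> step (Sum m n) a m'
| st_verd : forall v a, step (Verd v) a (Verd v).

Inductive steps : mon -> list A -> mon -> Prop :=
| sts_nil  : forall m, steps m [] m
| sts_cons : forall m a s m1 m2, step m a m1 -> steps m1 s m2 -> steps m (a :: s) m2.

Definition pref (s : list A) (m : mon) : mon := fold_right Pre m s.

(* sum_{a in l} a.m_a + sum_{x in xs} x [+ yes] [+ no], empty sum = end *)
Definition nf_term (l : list (A * mon)) (xs : list V) (y n : bool) : mon :=
  fold_right (fun p t => Sum (Pre (fst p) (snd p)) t)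
    (fold_right (fun x t => Sum (Var x) t)
       (Sum (if y then Verd vyes else mend) (if n then Verd vno else mend))
       xs) l.

Inductive onf : mon -> Prop :=
| onf_intro : forall (l : list (A * mon)) (xs : list V) (y n : bool) (t : mon),
    NoDup (map fst l) ->
    NoDup xs ->
    (forall p, In p l -> onf (snd p) /\ ~ ac_eq (snd p) mend) ->
    ac_eq t (nf_term l xs y n) ->
    onf t.

End Monitors.

(* Main.v *)
Require Import Defs.
From Stdlib Require Import List ClassicalEpsilon.
Import ListNotations.

Section Proof13.
Variables (A V : Type) (x : V).

Notation M := (mon A V).

Fixpoint topvar (y : V) (t : M) : Prop :=
  match t with
  | Var _ z => z = y
  | Sum t1 t2 => topvar y t1 \/ topvar y t2
  | _ => False
  end.

Lemma subst_comp (sg sg' : V -> M) t :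
  subst sg (subst sg' t) = subst (fun z => subst sg (sg' z)) t.
Proof. induction t; simpl; congruence. Qed.

Lemma subst_id (t : M) : subst (@Var A V) t = t.
Proof. induction t; simpl; congruence. Qed.

Lemma topvar_inv (t u : M) : derivable (@axA A V) t u ->
  forall sg y, (topvar y (subst sg t) <-> topvar y (subst sg u)).
Proof.
  induction 1; intros sg0 y; simpl.
  - destruct H; simpl; unfold mend; simpl; tauto.
  - tauto.
  - rewrite IHderivable; tauto.
  - rewrite IHderivable1; auto.
  - tauto.
  - rewrite IHderivable1, IHderivable2; tauto.
  - rewrite !subst_comp. apply IHderivable.
Qed.

Lemma hs_topvar (t : M) y : has_summand t y -> topvar y t.
Proof.
  intros [t' H]. pose proof (topvar_inv _ _ H (@Var A V) y) as E.
  rewrite !subst_id in E. apply E. simpl. auto.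
Qed.

Definition reach (s : list A) (t : M) := exists m'', steps t s m'' /\ topvar x m''.

Definition dec (P : Prop) : {P} + {~ P} := excluded_middle_informative P.

Fixpoint del (s : list A) (t : M) : M :=
  match t with
  | Verd _ _ v => Verd A V v
  | Var _ y => match s with [] => if dec (y = x) then mend A V else Var A y | _ => Var A y end
  | Sum t1 t2 => Sum (del s t1) (del s t2)
  | Pre b t0 => match s with [] => Pre b t0
                | a :: s' => if dec (b = a) then Pre b (del s' t0) else Pre b t0 end
  end.

Lemma reach_nil t : reach [] t <-> topvar x t.
Proof.
  split.
  - intros [m'' [H1 H2]]. inversion H1; subst; auto.
  - intros H. exists t; split; [constructor|auto].
Qed.

Lemma verd_steps v s (m'' : M) : steps (Verd A V v) s m'' -> m'' = Verd A V v.
Proof.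
  revert m''; induction s; intros m'' H; inversion H as [|? ? ? m1 ? Hs Hr]; subst; auto.
  inversion Hs; subst. auto.
Qed.

Lemma reach_sum s t1 t2 : reach s (Sum t1 t2) <-> reach s t1 \/ reach s t2.
Proof.
  destruct s as [|a s].
  - rewrite !reach_nil. simpl. tauto.
  - split.
    + intros [m'' [H1 H2]]. inversion H1 as [|? ? ? m1 ? Hs Hr]; subst.
      inversion Hs; subst.
      * left; exists m''; split; auto; econstructor; eauto.
      * right; exists m''; split; auto; econstructor; eauto.
    + intros [[m'' [H1 H2]]|[m'' [H1 H2]]]; inversion H1 as [|? ? ? m1 ? Hs Hr]; subst;
        exists m''; split; auto.
      * eapply sts_cons; [apply st_suml; eauto | eauto].
      * eapply sts_cons; [apply st_sumr; eauto | eauto].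
Qed.

Lemma reach_pre a s b t0 : reach (a :: s) (Pre b t0) <-> b = a /\ reach s t0.
Proof.
  split.
  - intros [m'' [H1 H2]]. inversion H1 as [|? ? ? m1 ? Hs Hr]; subst.
    inversion Hs; subst. split; auto. exists m''; auto.
  - intros [-> [m'' [H1 H2]]]. exists m''; split; auto. econstructor; eauto. constructor.
Qed.

Lemma del_noreach : forall t s, ~ reach s (del s t).
Proof.
  induction t as [v|b t0 IH|t1 IH1 t2 IH2|y]; intros s.
  - simpl. intros [m'' [H1 H2]]. apply verd_steps in H1. subst. exact H2.
  - destruct s as [|a s]; simpl.
    + rewrite reach_nil. simpl. auto.
    + destruct (dec (b = a)).
      * rewrite reach_pre. intros [_ H]. eapply IH; eauto.
      * rewrite reach_pre. tauto.
  - simpl. rewrite reach_sum. intros [H|H]; eauto. eapply IH1; eauto. eapply IH2; eauto.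
  - destruct s as [|a s]; simpl.
    + rewrite reach_nil. destruct (dec (y = x)); simpl; auto.
    + intros [m'' [H1 H2]]. inversion H1 as [|? ? ? m1 ? Hs Hr]; subst. inversion Hs.
Qed.

Lemma del_id : forall t s, ~ reach s t -> del s t = t.
Proof.
  induction t as [v|b t0 IH|t1 IH1 t2 IH2|y]; intros s H.
  - reflexivity.
  - destruct s as [|a s]; simpl; auto.
    destruct (dec (b = a)); auto. subst. rewrite IH; auto.
    intros R. apply H. apply reach_pre. auto.
  - simpl. rewrite reach_sum in H. rewrite IH1, IH2; auto.
  - destruct s as [|a s]; simpl; auto.
    destruct (dec (y = x)); auto. subst. exfalso. apply H. apply reach_nil. simpl. auto.
Qed.

Notation E := (@Ev_eq A V).

Lemma Eax t u : axA t u -> E t u.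
Proof. intros. apply d_ax. apply Ev_A. auto. Qed.
Lemma Ecomm t u : E (Sum t u) (Sum u t). Proof. apply Eax, A1. Qed.
Lemma Eassoc t u w : E (Sum t (Sum u w)) (Sum (Sum t u) w). Proof. apply Eax, A2. Qed.
Lemma Eidem t : E (Sum t t) t. Proof. apply Eax, A3. Qed.
Lemma Etr t u w : E t u -> E u w -> E t w. Proof. apply d_trans. Qed.
Lemma Esym t u : E t u -> E u t. Proof. apply d_sym. Qed.
Lemma Erefl t : E t t. Proof. apply d_refl. Qed.
Lemma Esum t1 u1 t2 u2 : E t1 u1 -> E t2 u2 -> E (Sum t1 t2) (Sum u1 u2).
Proof. apply d_sum. Qed.

Lemma Er1 d1 d2 p : E (Sum (Sum d1 p) d2) (Sum (Sum d1 d2) p).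
Proof.
  eapply Etr. apply Esym, Eassoc.
  eapply Etr. apply Esum. apply Erefl. apply Ecomm.
  apply Eassoc.
Qed.

Lemma Er2 d1 d2 p : E (Sum d1 (Sum d2 p)) (Sum (Sum d1 d2) p).
Proof. apply Eassoc. Qed.

Lemma Er3 d1 d2 p : E (Sum (Sum d1 p) (Sum d2 p)) (Sum (Sum d1 d2) p).
Proof.
  eapply Etr. apply Er1.
  eapply Etr. apply (Esym _ _ (Eassoc d1 (Sum d2 p) p)).
  eapply Etr. apply Esum. apply Erefl. apply (Esym _ _ (Eassoc d2 p p)).
  eapply Etr. apply Esum. apply Erefl. apply Esum. apply Erefl. apply Eidem.
  apply Eassoc.
Qed.

Lemma del_eq : forall t s, reach s t -> E t (Sum (del s t) (pref s (Var A x))).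
Proof.
  induction t as [v|b t0 IH|t1 IH1 t2 IH2|y]; intros s H.
  - exfalso. destruct H as [m'' [H1 H2]]. apply verd_steps in H1. subst. exact H2.
  - destruct s as [|a s].
    + apply reach_nil in H. destruct H.
    + apply reach_pre in H. destruct H as [-> H]. simpl.
      destruct (dec (a = a)) as [_|n]; [|congruence].
      eapply Etr. apply d_pre. apply (IH s H).
      apply d_ax. apply Ev_D.
  - simpl. pose proof H as H'. rewrite reach_sum in H'.
    destruct (classic (reach s t1)) as [R1|R1];
    destruct (classic (reach s t2)) as [R2|R2].
    + eapply Etr. apply Esum; [apply (IH1 s R1)|apply (IH2 s R2)]. apply Er3.
    + rewrite (del_id t2 s R2).
      eapply Etr. apply Esum; [apply (IH1 s R1)|apply Erefl]. apply Er1.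
    + rewrite (del_id t1 s R1).
      eapply Etr. apply Esum; [apply Erefl|apply (IH2 s R2)]. apply Er2.
    + tauto.
  - destruct s as [|a s].
    + apply reach_nil in H. simpl in H. subst. simpl.
      destruct (dec (x = x)) as [_|n]; [|congruence].
      eapply Etr. apply Esym. apply Eax, (A4 (Var A x)).
      apply Ecomm.
    + exfalso. destruct H as [m'' [H1 H2]]. inversion H1 as [|? ? ? m1 ? Hs Hr]; subst. inversion Hs.
Qed.

End Proof13.

Theorem mainTheorem13 (A V : Type) (Hne : inhabited A)
  (m : mon A V) (s : list A) (x : V) :
  onf m ->
  (exists ms, steps m s ms /\ has_summand ms x) ->
  exists m', Ev_eq m (Sum m' (pref s (Var A x))) /\
    ~ (exists m'', steps m' s m'' /\ has_summand m'' x).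
Proof.
  intros _ [ms [H1 H2]].
  assert (R : @reach A V x s m) by (exists ms; split; auto; apply hs_topvar; auto).
  exists (@del A V x s m). split.
  - apply del_eq; auto.
  - intros [m'' [G1 G2]]. apply (@del_noreach A V x m s).
    exists m''; split; auto. apply hs_topvar; auto.
Qed.
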